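(* For any assessment $\mathcal{A}\subseteq\mathscr{Q}$, the following are equivalent: (1) $\mathcal{A}$ is consistent; (2) $\mathrm{Ex}(\mathcal{A})$ is a coherent set of desirable option sets; (3) $\emptyset\notin\mathrm{Ex}(\mathcal{A})$.
   Context: Let $\mathcal{X}$ be a nonempty set and let $\mathscr{V}$ be the real vector space of all functions $u:\mathcal{X}\to\mathbb{R}$ (options), with pointwise operations. For $u,v\in\mathscr{V}$, $u\le v$ iff $u(x)\le v(x)$ for all $x\in\mathcal{X}$, and $u<v$ iff $u\le v$ and $u\neq v$. Let $\mathscr{V}_{>0}=\{u\in\mathscr{V}:0<u\}$ and $\mathscr{V}^s_{>0}=\{\{u\}:u\in\mathscr{V}_{>0}\}$. Let $\mathscr{Q}$ be the set of all finite subsets of $\mathscr{V}$ (including $\emptyset$). For a positive integer $n$, $\mathbb{R}^{n,+}=\{\boldsymbol\lambda\in\mathbb{R}^n:\lambda_j\ge0\ \forall j,\ \sum_j\lambda_j>0\}$, and for $\boldsymbol\lambda\in\mathbb{R}^n$, $\mathbf u=(u_1,\dots,u_n)\in\mathscr{V}^n$, $\boldsymbol\lambda\mathbf u=\sum_{j=1}^n\lambda_ju_j$. A set of desirable option sets is any $K\subseteq\mathscr{Q}$. It is coherent if for all $A,B\in K$: (K0) $A\setminus\{0\}\in K$; (K1) $\{0\}\notin K$; (K2) $\mathscr{V}^s_{>0}\subseteq K$; (K3) $\{\boldsymbol\lambda(\mathbf u)\mathbf u:\mathbf u\in A\times B\}\in K$ for every map $\boldsymbol\lambda:A\times B\to\mathbb{R}^{2,+}$;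 (K4) $A\cup Q\in K$ for all $Q\in\mathscr{Q}$. $\bar{\mathbf K}$ denotes the set of coherent sets of desirable option sets. An assessment is any subset $\mathcal{A}\subseteq\mathscr{Q}$. Let $\bar{\mathbf K}(\mathcal A)=\{K\in\bar{\mathbf K}:\mathcal A\subseteq K\}$ and $\mathrm{Ex}(\mathcal A)=\bigcap\bar{\mathbf K}(\mathcal A)$, with the convention $\bigcap\emptyset=\mathscr{Q}$. $\mathcal A$ is called consistent if $\bar{\mathbf K}(\mathcal A)\neq\emptyset$. *)

(* Defs.v *)
From HB Require Import structures.
From mathcomp Require Import all_boot all_order all_algebra.
From mathcomp Require Import boolp classical_sets cardinality reals.
Set Implicit Arguments. Unset Strict Implicit. Unset Printing Implicit Defensive.
Import Order.TTheory GRing.Theory Num.Theory.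
Local Open Scope classical_set_scope.
Local Open Scope ring_scope.

Section DesirableOptionSets.
Variables (R : realType) (X : Type).

Definition option_t := X -> R.
Definition opt0 : option_t := fun _ => 0.

Definition ople (u v : option_t) : Prop := forall x, u x <= v x.
Definition oplt (u v : option_t) : Prop := ople u v /\ u <> v.

(* Q : all finite subsets of options (including the empty set) *)
Definition Qsets : set (set option_t) := [set A | finite_set A].

Definition R2pos (l : R * R) : Prop := 0 <= l.1 /\ 0 <= l.2 /\ 0 < l.1 + l.2.

Definition lincomb (l : R * R) (u : option_t * option_t) : option_t :=
  fun x => l.1 * u.1 x + l.2 * u.2 x.

Definition coherent (K : set (set option_t)) : Prop :=
  K `<=` Qsets /\
  (forall A, K A -> K (A `\ opt0)) /\
  ~ K [set opt0] /\
  (forall u, oplt opt0 u -> K [set u]) /\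
  (forall A B, K A -> K B ->
             forall lam : option_t * option_t -> R * R,
               (forall u, (A `*` B) u -> R2pos (lam u)) ->
               K [set lincomb (lam u) u | u in A `*` B]) /\
  (forall A Q, K A -> Qsets Q -> K (A `|` Q)).

Definition Kbar (As : set (set option_t)) : set (set (set option_t)) :=
  [set K | coherent K /\ As `<=` K].

(* Ex(A) = \bigcap \bar K(A), with \bigcap \emptyset = Q *)
Definition Ex (As : set (set option_t)) : set (set option_t) :=
  [set S | Qsets S /\ forall K, Kbar As K -> K S].

Definition consistent (As : set (set option_t)) : Prop := Kbar As !=set0.

End DesirableOptionSets.

(* Main.v *)
Require Import Defs.
From mathcomp Require Import all_boot all_order all_algebra.
From mathcomp Require Import boolp classical_sets cardinality reals.
Local Open Scope classical_set_scope.

Theorem theorem3 (R : realType) (X : Type) (x0 : X)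
    (As : set (set (option_t R X))) :
  As `<=` @Qsets R X ->
  (consistent As <-> coherent (Ex As)) /\
  (coherent (Ex As) <-> ~ Ex As set0).
Proof.
move=> HAs; rewrite /consistent /Ex /Kbar /=.
have H12 : (exists K, coherent K /\ As `<=` K) -> coherent (Ex As).
  case=> K0 KK; have [[HQ0 [_ [HK10 [_ [HK30 _]]]]] _] := KK.
  split; first by move=> S [].
  split.
    move=> A [QA HA]; split; first exact: finite_setD.
    move=> K HKb; have [[_ [HK _]] _] := HKb.
    by apply: HK; apply: HA.
  split.
    by move=> [_ H]; apply: HK10; apply: H.
  split.
    move=> u Hu; split; first exact: finite_set1.
    move=> K HKb; have [[_ [_ [_ [HK _]]]] _] := HKb.
    by apply: HK.
  split.
    move=> A B [QA HA] [QB HB] lam Hlam; split.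
      by apply: HQ0; apply: HK30 => //; [apply: HA | apply: HB].
    move=> K HKb; have [[_ [_ [_ [_ [HK _]]]]] _] := HKb.
    by apply: HK => //; [apply: HA | apply: HB].
  move=> A Q [QA HA] HQ; split; first by rewrite /Qsets /= finite_setU.
  move=> K HKb; have [[_ [_ [_ [_ [_ HK]]]]] _] := HKb.
  by apply: HK => //; apply: HA.
have H23 : coherent (Ex As) -> ~ Ex As set0.
  move=> [_ [_ [HK1 [_ [_ HK4]]]]] H0.
  apply: HK1.
  have := HK4 _ [set (@opt0 R X)] H0 (finite_set1 _).
  by rewrite set0U.
have H31 : ~ Ex As set0 -> exists K, coherent K /\ As `<=` K.
  move=> H; apply: contrapT => Hn; apply: H; split; first exact: finite_set0.
  by move=> K HK; exfalso; apply: Hn; exists K.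
split; split => [h|h]; [exact: H12 | exact: H31 (H23 h) | exact: H23 | exact: H12 (H31 h)].
Qed.
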